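(* The algorithm Balance is not competitive for the infinite server problem on the real line.
   Context: Infinite server problem on the real line: an unbounded number of servers initially reside at a source point; a finite sequence of requests is revealed one by one; each must be served immediately, without knowledge of future requests, by moving a server to it; the cost is the total distance traveled. Balance serves a request $r$ by moving to $r$ a server $x$ minimizing $D_x+d(x,r)$, where $D_x$ is the cumulative distance traveled by $x$ so far and $d(x,r)$ is its distance to $r$ (servers still at the source have $D_x=0$). An online algorithm is competitive if there are $\rho,c$ with $ALG(\sigma)\le\rho\,OPT(\sigma)+c$ for all request sequences $\sigma$. *)

(* Defs.v *)
From Stdlib Require Import Reals List.
Import ListNotations.
Open Scope R_scope.

(* Servers are indexed by nat (unboundedly many); all start at the source s
   with cumulative travelled distance 0.
   A history is a list of requests, MOST RECENT FIRST.
   A (deterministic, online) strategy [sel] maps the history including the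
   current request to the index of the server that moves to the current
   request.  Since [sel] sees only the past and current requests, it is
   online; for a fixed request sequence it can realise any offline schedule. *)

Definition upd (f : nat -> R) (i : nat) (v : R) : nat -> R :=
  fun j => if Nat.eqb j i then v else f j.

Fixpoint run (s : R) (sel : list R -> nat) (h : list R)
  : (nat -> R) * (nat -> R) * R :=
  match h with
  | [] => (fun _ => s, fun _ => 0, 0)
  | r :: h' =>
      let st := run s sel h' in
      let p := fst (fst st) in
      let D := snd (fst st) in
      let c := snd st in
      let i := sel h in
      let d := Rabs (p i - r) in
      (upd p i r, upd D i (D i + d), c + d)
  end.

Definition positions s sel h := fst (fst (run s sel h)).
Definition distances s sel h := snd (fst (run s sel h)).

Definition cost (s : R) (sel : list R -> nat) (sigma : list R) : R :=
  snd (run s sel (rev sigma)).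

Definition is_balance (s : R) (sel : list R -> nat) : Prop :=
  forall (r : R) (h : list R),
    let p := positions s sel h in
    let D := distances s sel h in
    let i := sel (r :: h) in
    forall j : nat, D i + Rabs (p i - r) <= D j + Rabs (p j - r).

Definition is_opt (s : R) (sigma : list R) (v : R) : Prop :=
  (exists sel, cost s sel sigma = v) /\ (forall sel, v <= cost s sel sigma).

Definition competitive (s : R) (alg : list R -> nat) : Prop :=
  exists rho c : R, forall (sigma : list R) (v : R),
    is_opt s sigma v -> cost s alg sigma <= rho * v + c.

(* Main.v *)
Require Import Defs.
From Stdlib Require Import Reals List Lra Lia Psatz.
Import ListNotations.
Open Scope R_scope.

Ltac rabs := unfold Rabs in *; repeat match goal with
  | |- context [Rcase_abs ?x] => destruct (Rcase_abs x)
  | H : context [Rcase_abs ?x] |- _ => destruct (Rcase_abs x)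
  end; lra.

Fixpoint Hs (s : R) (N : nat) (m : nat) : list R :=
  match m with
  | O => []
  | S m' => (s + INR N - INR m') :: Hs s N m'
  end.

Lemma pos_cons s sel r h :
  positions s sel (r :: h) = upd (positions s sel h) (sel (r :: h)) r.
Proof. reflexivity. Qed.

Lemma dist_cons s sel r h :
  distances s sel (r :: h) = upd (distances s sel h) (sel (r :: h))
    (distances s sel h (sel (r :: h)) + Rabs (positions s sel h (sel (r :: h)) - r)).
Proof. reflexivity. Qed.

Lemma cost_cons s sel r h :
  snd (run s sel (r :: h)) = snd (run s sel h) +
    Rabs (positions s sel h (sel (r :: h)) - r).
Proof. reflexivity. Qed.

Lemma pos_inv s sel N m : (m <= N)%nat -> forall j,
  positions s sel (Hs s N m) j = s \/
  positions s sel (Hs s N m) j >= s + INR N - INR m + 1.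
Proof.
  induction m as [|m IH]; intros Hm j.
  - left; reflexivity.
  - simpl Hs. rewrite pos_cons. unfold upd.
    rewrite S_INR.
    destruct (Nat.eqb j _).
    + right; lra.
    + destruct (IH ltac:(lia) j) as [H|H]; [left; exact H | right; lra].
Qed.

Lemma dist_ge s sel h : forall j,
  distances s sel h j >= Rabs (positions s sel h j - s).
Proof.
  induction h as [|r h IH]; intros j.
  - unfold distances, positions; simpl. rabs.
  - rewrite dist_cons, pos_cons. unfold upd.
    destruct (Nat.eqb j _).
    + pose proof (IH (sel (r :: h))). rabs.
    + apply IH.
Qed.

Fixpoint B (sel : list R -> nat) (h : list R) : nat :=
  match h with
  | [] => O
  | r :: h' => Nat.max (sel (r :: h')) (B sel h')
  end.

Lemma fresh_aux s sel h : forall j, (j > B sel h)%nat ->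
  positions s sel h j = s /\ distances s sel h j = 0.
Proof.
  induction h as [|r h IH]; intros j Hj.
  - split; reflexivity.
  - rewrite dist_cons, pos_cons. unfold upd. simpl in Hj.
    assert (E : Nat.eqb j (sel (r :: h)) = false) by (apply Nat.eqb_neq; lia).
    rewrite E. apply IH. lia.
Qed.

Lemma fresh s sel h : exists j, positions s sel h j = s /\ distances s sel h j = 0.
Proof. exists (S (B sel h)). apply fresh_aux. lia. Qed.

Lemma balance_cost s sel N m : is_balance s sel -> (m <= N)%nat ->
  snd (run s sel (Hs s N m)) = INR m * (2 * INR N - INR m + 1) / 2.
Proof.
  intros Hb. induction m as [|m IH]; intros Hm.
  - simpl. lra.
  - simpl Hs. rewrite cost_cons. rewrite IH by lia.
    set (h := Hs s N m). set (r := s + INR N - INR m).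
    set (i := sel (r :: h)).
    destruct (fresh s sel h) as [j [Hp Hd]].
    pose proof (Hb r h) as Hb'. cbv zeta in Hb'. specialize (Hb' j).
    fold i in Hb'. rewrite Hp, Hd in Hb'.
    assert (HN : INR m + 1 <= INR N) by (rewrite <- S_INR; apply le_INR; lia).
    pose proof (dist_ge s sel h i) as Hdi.
    destruct (pos_inv s sel N m ltac:(lia) i) as [Hpi|Hpi]; fold h in Hpi.
    + rewrite Hpi. rewrite S_INR. unfold r.
      replace (Rabs (s - (s + INR N - INR m))) with (INR N - INR m) by rabs.
      field.
    + exfalso. unfold r in Hb'. rabs.
Qed.

Lemma opt_lower s sel N m : (1 <= m <= N)%nat ->
  snd (run s sel (Hs s N m)) >= INR N + INR m - 1.
Proof.
  induction m as [|m IH]; intros Hm; [lia|].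
  simpl Hs. rewrite cost_cons.
  destruct m as [|m'].
  - simpl. unfold positions; simpl. rabs.
  - assert (HN : INR (S m') + 1 <= INR N) by (rewrite <- S_INR; apply le_INR; lia).
    pose proof (IH ltac:(lia)) as IH'.
    set (h := Hs s N (S m')) in *.
    set (i := sel _).
    destruct (pos_inv s sel N (S m') ltac:(lia) i) as [Hpi|Hpi]; fold h in Hpi;
      pose proof (S_INR (S m')); rabs.
Qed.

Lemma opt_upper s N m : (S m <= N)%nat ->
  snd (run s (fun _ => O) (Hs s N (S m))) = INR N + INR m /\
  positions s (fun _ => O) (Hs s N (S m)) O = s + INR N - INR m.
Proof.
  induction m as [|m IH]; intros Hm.
  - simpl. unfold positions; simpl. unfold upd; simpl. pose proof (pos_INR N).
    split; [rabs | lra].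
  - destruct (IH ltac:(lia)) as [Hc Hp].
    change (Hs s N (S (S m))) with ((s + INR N - INR (S m)) :: Hs s N (S m)).
    rewrite cost_cons, pos_cons, Hc, Hp. unfold upd. simpl Nat.eqb.
    rewrite S_INR. split; [rabs | lra].
Qed.

Theorem proposition4 :
  forall (s : R) (alg : list R -> nat), is_balance s alg -> ~ competitive s alg.
Proof.
  intros s alg Hb [rho [c Hc]].
  destruct (INR_unbounded (4 * Rabs rho + 2 * Rabs c + 1)) as [K HK].
  set (N := S K).
  set (sigma := rev (Hs s N N)).
  assert (Hopt : is_opt s sigma (INR N + INR K)).
  { split.
    - exists (fun _ => O). unfold cost, sigma. rewrite rev_involutive.
      apply (opt_upper s N K). unfold N; lia.
    - intros sel. unfold cost, sigma. rewrite rev_involutive.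
      pose proof (opt_lower s sel N N ltac:(unfold N; lia)).
      unfold N in *. rewrite S_INR in *. lra. }
  specialize (Hc sigma _ Hopt).
  unfold cost, sigma in Hc. rewrite rev_involutive in Hc.
  rewrite (balance_cost s alg N N Hb (le_n _)) in Hc.
  unfold N in Hc. rewrite S_INR in Hc.
  pose proof (Rle_abs rho). pose proof (Rle_abs c).
  pose proof (Rabs_pos rho). pose proof (Rabs_pos c).
  assert (rho * (INR K + 1 + INR K) <= Rabs rho * (INR K + 1 + INR K)).
  { apply Rmult_le_compat_r; [pose proof (pos_INR K); lra | lra]. }
  nra.
Qed.
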